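(* Let $c_1,c_2,c_3\in\mathbb{C}$ be three non-aligned points with $c_1+c_2+c_3=0$. For every $\eta>0$ there exist $\epsilon_0\in(0,\eta)$ and $\alpha_0\in(0,\eta)$ such that for every $\rho\in\mathbb{C}$ with $1-\alpha_0\le|\rho|\le1+\alpha_0$, setting $\phi_j(z):=\rho z+\epsilon_0c_j$ for $j\in\{1,2,3\}$, we have $$\overline{\mathbb{D}}\subset\bigcup_{j=1}^3\phi_j(\mathbb{D}),$$ and there are three open sets $H_1,H_2,H_3$ such that $\mathbb{D}=\bigcup_{j=1}^3H_j$, $\overline{\phi_j(H_j)}\subset\mathbb{D}$ and $\overline{\phi_j(\tfrac13H_j)}\subset\tfrac13\mathbb{D}$ for each $j$.
   Context: $\mathbb{D}$ is the unit disc of $\mathbb{C}$; for $E\subset\mathbb{C}$ and $t\in\mathbb{C}^*$, $tE$ is the image of $E$ under $z\mapsto tz$. The sets $H_j$ may depend on $\rho$. *)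

(* Defs.v *)
From HB Require Import structures.
From mathcomp Require Import all_boot all_order all_algebra.
From mathcomp Require Import all_classical all_reals all_analysis.
From mathcomp Require Export complex.
Export Order.TTheory GRing.Theory Num.Theory.
Export numFieldNormedType.Exports.

Set Implicit Arguments.
Unset Strict Implicit.
Unset Printing Implicit Defensive.

Local Open Scope classical_set_scope.
Local Open Scope ring_scope.
Local Open Scope complex_scope.

(* The complex plane over R, seen as a numClosedFieldType so that it
   receives its (norm) topology from MathComp-Analysis. *)
Definition CC (R : rcfType) : numClosedFieldType := R[i].

Definition udisc (R : rcfType) : set (CC R) := [set z | `|z| < 1].
Arguments udisc R : clear implicits.

Definition cdilate (R : rcfType) (t : CC R) (E : set (CC R)) : set (CC R) :=
  (fun z => t * z) @` E.

Definition aligned (R : rcfType) (c1 c2 c3 : CC R) : Prop :=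
  exists a b : CC R, a != 0 /\
    forall z, z \in [:: c1; c2; c3] -> exists t : R, z = b + t%:C * a.

(* Main.v *)
Require Import Defs.
From HB Require Import structures.
From mathcomp Require Import all_boot all_order all_algebra.
From mathcomp Require Import all_classical all_reals all_analysis.
From mathcomp Require Import complex.
From mathcomp Require Import ring lra.
Import Order.TTheory GRing.Theory Num.Theory.
Import numFieldNormedType.Exports.
Local Open Scope classical_set_scope.
Local Open Scope ring_scope.
Local Open Scope complex_scope.
Section Real.
Context {R : realType}.

Lemma min3_bound (a b c : R) : a + b + c = 0 -> a <= b -> a <= c ->
  a <= 0 /\ a^+2 + b^+2 + c^+2 <= 12 * a^+2.
Proof. move=> h1 h2 h3. split; first lra.
have hb : b <= -2 * a by lra. have hc : c <= - 2 * a by lra.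
have: a <= 0 by lra. move=> ha.
nra.
Qed.

Lemma key_real (p0 q0 p1 q1 p2 q2 : R) :
  p0 + p1 + p2 = 0 -> q0 + q1 + q2 = 0 ->
  0 < (p0 * q1 - p1 * q0)^+2 + (p0 * q2 - p2 * q0)^+2 + (p1 * q2 - p2 * q1)^+2 ->
  exists d : R, (0 < d <= 1) /\ (forall x y : R,
    [\/ x * p0 + y * q0 <= - (d * Num.sqrt (x^+2 + y^+2)),
        x * p1 + y * q1 <= - (d * Num.sqrt (x^+2 + y^+2)) |
        x * p2 + y * q2 <= - (d * Num.sqrt (x^+2 + y^+2))]).
Proof.
move=> hp hq hD.
set D0 := _ + _ + _ in hD.
set A := p0^+2 + p1^+2 + p2^+2.
set C := q0^+2 + q1^+2 + q2^+2.
set B := p0 * q0 + p1 * q1 + p2 * q2.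
have hD0 : D0 = A * C - B^+2 by rewrite /D0 /A /B /C; ring.
have hA : 0 <= A by rewrite /A; nra.
have hC : 0 <= C by rewrite /C; nra.
have hAC : 0 < A + C.
  rewrite lt_neqAle addr_ge0 // andbT; apply/eqP=> h0.
  have hA0 : A = 0 by lra.
  have hC0 : C = 0 by lra.
  move: hD; rewrite hD0 hA0 mul0r; nra.
pose lam := D0 / (A + C).
have hlam : 0 < lam by rewrite /lam divr_gt0.
have hQ : forall x y : R, lam * (x^+2 + y^+2) <=
   (x * p0 + y * q0)^+2 + (x * p1 + y * q1)^+2 + (x * p2 + y * q2)^+2.
  move=> x y.
  have e : (A + C) * ((x * p0 + y * q0)^+2 + (x * p1 + y * q1)^+2 + (x * p2 + y * q2)^+2)
     - D0 * (x^+2 + y^+2) = (A * x + B * y)^+2 + (B * x + C * y)^+2.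
    rewrite hD0 /A /B /C; ring.
  have sq : 0 <= (A * x + B * y)^+2 + (B * x + C * y)^+2 by rewrite addr_ge0 // sqr_ge0.
  rewrite /lam mulrAC ler_pdivrMr //.
  lra.
pose d := Num.min 1 (lam / 12).
have hd0 : 0 < d by rewrite /d lt_min ltr01 /= divr_gt0.
have hd1 : d <= 1 by rewrite /d ge_min lexx.
have hd2 : d <= lam / 12 by rewrite /d ge_min lexx orbT.
exists d; split; first by rewrite hd0 hd1.
move=> x y.
set N := Num.sqrt _.
have hN : 0 <= N by exact: sqrtr_ge0.
have hN2 : N^+2 = x^+2 + y^+2 by rewrite sqr_sqrtr // addr_ge0 // sqr_ge0.
have hQxy := hQ x y.
set a0 := x * p0 + y * q0 in hQxy *.
set a1 := x * p1 + y * q1 in hQxy *.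
set a2 := x * p2 + y * q2 in hQxy *.
have hs : a0 + a1 + a2 = 0.
  by rewrite /a0 /a1 /a2 -[RHS](_ : x * (p0 + p1 + p2) + y * (q0 + q1 + q2) = 0);
   [ring | rewrite hp hq; ring].
have fin : forall a, a <= 0 -> lam * N^+2 <= 12 * a^+2 -> a <= - (d * N).
  move=> a ha hl.
  have hdd : d^+2 <= lam / 12 by nra.
  have : (d * N)^+2 <= a^+2.
    have : d^+2 * N^+2 <= lam / 12 * N^+2 by apply: ler_wpM2r; [exact: sqr_ge0|].
    nra.
  move=> hsq. rewrite leNgt; apply/negP=> hlt.
  have : a^+2 < (d * N)^+2 by nra.
  lra.
rewrite hN2 in fin.
case: (lerP a0 a1) => h01; case: (lerP a0 a2) => h02; case: (lerP a1 a2) => h12.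
- have [ha hb] := @min3_bound a0 a1 a2 hs h01 h02. by apply: Or31; apply: fin => //; lra.
- have [ha hb] := @min3_bound a0 a1 a2 hs h01 h02. by apply: Or31; apply: fin => //; lra.
- have [ha hb] : a2 <= 0 /\ a2^+2 + a0^+2 + a1^+2 <= 12 * a2^+2.
    apply: min3_bound; lra.
  by apply: Or33; apply: fin => //; lra.
- have [ha hb] : a2 <= 0 /\ a2^+2 + a0^+2 + a1^+2 <= 12 * a2^+2.
    apply: min3_bound; lra.
  by apply: Or33; apply: fin => //; lra.
- have [ha hb] : a1 <= 0 /\ a1^+2 + a0^+2 + a2^+2 <= 12 * a1^+2.
    apply: min3_bound; lra.
  by apply: Or32; apply: fin => //; lra.
- have [ha hb] : a2 <= 0 /\ a2^+2 + a0^+2 + a1^+2 <= 12 * a2^+2.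
    apply: min3_bound; lra.
  by apply: Or33; apply: fin => //; lra.
- have [ha hb] : a1 <= 0 /\ a1^+2 + a0^+2 + a2^+2 <= 12 * a1^+2.
    apply: min3_bound; lra.
  by apply: Or32; apply: fin => //; lra.
- have [ha hb] : a2 <= 0 /\ a2^+2 + a0^+2 + a1^+2 <= 12 * a2^+2.
    apply: min3_bound; lra.
  by apply: Or33; apply: fin => //; lra.
Qed.

Lemma L1 (N B t d : R) : 0 <= N -> N <= B -> 1 <= B -> 0 <= t * d -> 2 * (t * d) <= 1 ->
  N^+2 - 2 * (t * d) * N <= B^+2 - 2 * (t * d).
Proof.
move=> h0 h1 h2 h3 h4.
have e1 : N^+2 <= B * N by rewrite expr2; apply: ler_wpM2r.
have e2 : N * (B - 2 * (t * d)) <= B * (B - 2 * (t * d)) by apply: ler_wpM2r => //; lra.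
nra.
Qed.

Lemma sqrt_lt (X r : R) : 0 < r -> X < r^+2 -> Num.sqrt X < r.
Proof.
move=> hr hX. case: (lerP 0 X) => hX0.
  have hs := sqrtr_ge0 X. have hs2 := sqr_sqrtr hX0.
  rewrite ltNge; apply/negP => hle.
  have : r^+2 <= (Num.sqrt X)^+2 by rewrite !expr2; apply: ler_pM => //; exact: ltW.
  lra.
by rewrite ltr0_sqrtr.
Qed.

Lemma L_cov (x y p q e d alpha S nr : R) :
  0 < e -> 0 < d -> d <= 1 -> 0 <= alpha -> 8 * alpha <= e * d -> 6 * e * S <= d -> 1 <= S ->
  p^+2 + q^+2 <= S -> 1 - alpha <= nr ->
  Num.sqrt (x^+2 + y^+2) < 1 + alpha ->
  d * Num.sqrt (x^+2 + y^+2) <= x * p + y * q ->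
  Num.sqrt ((x - e * p)^+2 + (y - e * q)^+2) < nr.
Proof.
move=> he hd hd1 ha ha8 heS hS1 hpq hnr hN hxy.
set N := Num.sqrt _ in hN hxy.
have hN0 : 0 <= N := sqrtr_ge0 _.
have hN2 : N^+2 = x^+2 + y^+2 by rewrite sqr_sqrtr // addr_ge0 // sqr_ge0.
have hed : e * d <= 1/6.
  have : e * S <= d / 6 by lra.
  have : e <= e * S by rewrite ler_peMr //; lra.
  nra.
have hB' := @L1 N (1 + alpha) e d hN0 (ltW hN) ltac:(lra) ltac:(nra) ltac:(lra).
have heS2 : e^+2 * (p^+2 + q^+2) <= e * d / 6.
  have : e^+2 * (p^+2 + q^+2) <= e^+2 * S by apply: ler_wpM2l => //; exact: sqr_ge0.
  nra.
have hexp : (x - e * p)^+2 + (y - e * q)^+2 = N^+2 - 2 * e * (x * p + y * q) + e^+2 * (p^+2 + q^+2).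
  rewrite hN2; ring.
apply: sqrt_lt; first lra.
rewrite hexp.
have hxy' : 2 * e * (d * N) <= 2 * e * (x * p + y * q) by apply: ler_wpM2l => //; lra.
have ha2 : alpha^+2 <= alpha by nra.
nra.
Qed.

Lemma L_H (x y p q t e d alpha S : R) :
  0 < e -> 0 < d -> d <= 1 -> 0 <= alpha -> 8 * alpha <= e * d -> 6 * e * S <= d -> 1 <= S ->
  p^+2 + q^+2 <= S -> e <= t -> t <= 3 * e ->
  Num.sqrt (x^+2 + y^+2) < 1 + alpha ->
  x * p + y * q <= - (d * Num.sqrt (x^+2 + y^+2)) ->
  Num.sqrt ((x + t * p)^+2 + (y + t * q)^+2) < 1 - e * d / 2.
Proof.
move=> he hd hd1 ha ha8 heS hS1 hpq het ht3 hN hxy.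
set N := Num.sqrt _ in hN hxy.
have hN0 : 0 <= N := sqrtr_ge0 _.
have hN2 : N^+2 = x^+2 + y^+2 by rewrite sqr_sqrtr // addr_ge0 // sqr_ge0.
have hed : e * d <= 1/6.
  have : e * S <= d / 6 by lra.
  have : e <= e * S by rewrite ler_peMr //; lra.
  nra.
have ht0 : 0 < t by lra.
have htd : t * d <= 3 * (e * d) by nra.
have hB' := @L1 N (1 + alpha) t d hN0 (ltW hN) ltac:(lra) ltac:(nra) ltac:(lra).
have htS : t^+2 * (p^+2 + q^+2) <= t * d / 2.
  have : t^+2 * (p^+2 + q^+2) <= t^+2 * S by apply: ler_wpM2l => //; exact: sqr_ge0.
  have : t * S <= d / 2 by nra.
  nra.
have hexp : (x + t * p)^+2 + (y + t * q)^+2 = N^+2 + 2 * t * (x * p + y * q) + t^+2 * (p^+2 + q^+2).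
  rewrite hN2; ring.
apply: sqrt_lt; first lra.
rewrite hexp.
have hxy' : 2 * t * (x * p + y * q) <= 2 * t * (- (d * N)) by apply: ler_wpM2l => //; lra.
have ha2 : alpha^+2 <= alpha by nra.
have htd1 : e * d <= t * d by nra.
nra.
Qed.
End Real.

Section Cx.
Context {R : realType}.
Local Notation RE := (@complex.Re R).
Local Notation IM := (@complex.Im R).
Lemma ReM (x y : CC R) : RE (x * y) = RE x * RE y - IM x * IM y.
Proof. by case: x => a b; case: y => c d. Qed.
Lemma ImM (x y : CC R) : IM (x * y) = RE x * IM y + IM x * RE y.
Proof. case: x => a b; case: y => c d /=. ring. Qed.
Lemma ReD (x y : CC R) : RE (x + y) = RE x + RE y.
Proof. by case: x => a b; case: y => c d. Qed.
Lemma ImD (x y : CC R) : IM (x + y) = IM x + IM y.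
Proof. by case: x => a b; case: y => c d. Qed.
Lemma ReN (x : CC R) : RE (- x) = - RE x.
Proof. by case: x. Qed.
Lemma ImN (x : CC R) : IM (- x) = - IM x.
Proof. by case: x. Qed.

Definition nz (z : CC R) : R := Num.sqrt (RE z ^+ 2 + IM z ^+ 2).
Lemma normCE (z : CC R) : `|z| = (nz z)%:C.
Proof. exact: normc_def. Qed.
Lemma nz_ge0 z : 0 <= nz z. Proof. exact: sqrtr_ge0. Qed.
Lemma nzM x y : nz (x * y) = nz x * nz y.
Proof. apply: (@complexI R). by rewrite -!normCE normrM !normCE rmorphM. Qed.

Lemma ReaddMR (u c : CC R) (t : R) : RE (u + t%:C * c) = RE u + t * RE c.
Proof. by rewrite ReD ReM /= mul0r subr0. Qed.
Lemma ImaddMR (u c : CC R) (t : R) : IM (u + t%:C * c) = IM u + t * IM c.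
Proof. by rewrite ImD ImM /= mul0r addr0. Qed.

Lemma colin (z a : CC R) : a != 0 -> RE z * IM a - RE a * IM z = 0 ->
  z = 0 + ((RE z * RE a + IM z * IM a) / (RE a ^+ 2 + IM a ^+ 2))%:C * a.
Proof.
case: z => x y; case: a => u v /= ha hc.
have hN : u ^+ 2 + v ^+ 2 != 0.
  apply/negP => /eqP h0; move: ha; rewrite eq_complex /=.
  have hu : u = 0 by nra. have hv : v = 0 by nra.
  by rewrite hu hv !eqxx.
set t := (_ / _).
have ht : t * (u ^+ 2 + v ^+ 2) = x * u + y * v by rewrite /t mulfVK.
rewrite add0r; apply/eqP; rewrite eq_complex /=; apply/andP; split; apply/eqP.
- rewrite mul0r subr0.
  apply: (mulIf hN). rewrite mulrAC ht. 
  have e : x * (u ^+ 2 + v ^+ 2) - (x * u + y * v) * u = v * (x * v - u * y) by ring.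
  have e2 : x * v - u * y = 0 by lra.
  rewrite e2 mulr0 in e. lra.
- rewrite mul0r addr0.
  apply: (mulIf hN). rewrite mulrAC ht.
  have e : y * (u ^+ 2 + v ^+ 2) - (x * u + y * v) * v = u * (u * y - x * v) by ring.
  have e2 : u * y - x * v = 0 by lra.
  rewrite e2 mulr0 in e. lra.
Qed.

Lemma sq3 (a b c : R) : a^+2 + b^+2 + c^+2 = 0 -> [/\ a = 0, b = 0 & c = 0].
Proof.
move=> h.
have ha := sqr_ge0 a; have hb := sqr_ge0 b; have hc := sqr_ge0 c.
have ea : a^+2 = 0 by lra. have eb : b^+2 = 0 by lra. have ec : c^+2 = 0 by lra.
by split; apply/eqP; rewrite -sqrf_eq0; apply/eqP.
Qed.

Lemma notal_D0 (c0 c1 c2 : CC R) : ~ aligned c0 c1 c2 ->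
  0 < (RE c0 * IM c1 - RE c1 * IM c0)^+2 + (RE c0 * IM c2 - RE c2 * IM c0)^+2
      + (RE c1 * IM c2 - RE c2 * IM c1)^+2.
Proof.
move=> hna; rewrite lt_neqAle !addr_ge0 ?sqr_ge0 // andbT.
apply/negP => /eqP /esym /sq3 [k01 k02 k12].
have H : forall a, a != 0 -> RE c0 * IM a - RE a * IM c0 = 0 ->
   RE c1 * IM a - RE a * IM c1 = 0 -> RE c2 * IM a - RE a * IM c2 = 0 -> False.
  move=> a ha h0 h1 h2; apply: hna; exists a, 0; split => //.
  move=> z; rewrite !inE => /or3P [] /eqP ->.
  - by eexists; apply: colin.
  - by eexists; apply: colin.
  - by eexists; apply: colin.
case: (eqVneq c0 0) => [e0|n0]; last by apply: (H c0) => //; lra.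
case: (eqVneq c1 0) => [e1|n1]; last by apply: (H c1) => //; lra.
case: (eqVneq c2 0) => [e2|n2]; last by apply: (H c2) => //; lra.
apply: hna; exists 1, 0; split; first exact: oner_neq0.
move=> z; rewrite !inE => /or3P [] /eqP ->; exists 0; by rewrite ?e0 ?e1 ?e2 mul0r addr0.
Qed.
Lemma ballE (a w : CC R) (r : CC R) : ball a r w = (`|a - w| < r).
Proof. by []. Qed.

Lemma closure_sub_ball (a : CC R) (r1 r2 : R) (A : set (CC R)) :
  r1 < r2 -> A `<=` ball a r1%:C -> closure A `<=` ball a r2%:C.
Proof.
move=> hr hA z hz.
have hpos : (0 : CC R) < (r2 - r1)%:C by rewrite ltcR subr_gt0.
have := hz _ (nbhsx_ballx z _ hpos). move=> [w [Aw bw]].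
have := hA _ Aw; rewrite !ballE => haw.
move: bw; rewrite ballE => hzw.
rewrite (le_lt_trans (ler_distD w _ _)) //.
rewrite -[r2%:C](_ : r1%:C + (r2 - r1)%:C = r2%:C); last by rewrite -rmorphD addrC subrK.
by rewrite ltrD // distrC.
Qed.

Lemma open_aff (rho w : CC R) (r : CC R) :
  open ((fun z => rho * z + w) @^-1` ball 0 r).
Proof.
apply: open_comp; last exact: ball_open.
move=> x _.
have h1 : {for x, continuous (fun _ : CC R => rho)} := @cst_continuous _ _ rho x.
have h2 : {for x, continuous (fun z : CC R => z)} := fun P hP => hP.
have h3 : {for x, continuous (fun _ : CC R => w)} := @cst_continuous _ _ w x.
exact: (continuousD (continuousM h1 h2) h3).
Qed.

Lemma udiscE : udisc R = ball (0 : CC R) 1.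
Proof. by rewrite /udisc; apply/seteqP; split => z /=; rewrite ballE sub0r normrN. Qed.
Lemma nzD (u c : CC R) t :
  nz (u + t%:C * c) = Num.sqrt ((RE u + t * RE c)^+2 + (IM u + t * IM c)^+2).
Proof. by rewrite /nz ReaddMR ImaddMR. Qed.
Lemma nzB (u c : CC R) t :
  nz (u - t%:C * c) = Num.sqrt ((RE u - t * RE c)^+2 + (IM u - t * IM c)^+2).
Proof.
by rewrite /nz ReD ImD ReN ImN ReM ImM /= !mul0r subr0 addr0.
Qed.
Lemma one_C : (1 : CC R) = (1 : R)%:C. Proof. by rewrite rmorph1. Qed.
Lemma three_C : (3 : CC R) = (3 : R)%:C. Proof. by rewrite rmorph_nat. Qed.
Lemma nz0 : nz 0 = 0.
Proof. by apply: (@complexI R); rewrite -normCE normr0. Qed.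
Lemma ord3 (j : 'I_3) : [\/ j = ord0, j = inord 1 | j = inord 2].
Proof.
case: j => [[|[|[|k]]] hk].
- by apply: Or31; apply/val_inj.
- by apply: Or32; apply/val_inj; rewrite /= inordK.
- by apply: Or33; apply/val_inj; rewrite /= inordK.
- by [].
Qed.
End Cx.

Local Notation RE := (@complex.Re _).
Local Notation IM := (@complex.Im _).

Theorem lemma3p2 (R : realType) (c : 'I_3 -> CC R)
  (hna : ~ aligned (c ord0) (c (inord 1)) (c (inord 2)))
  (hsum : c ord0 + c (inord 1) + c (inord 2) = 0) :
  forall eta : R, 0 < eta ->
  exists eps0 alpha0 : R,
    [/\ 0 < eps0 < eta, 0 < alpha0 < eta &
    forall rho : CC R,
      (1 - alpha0)%:C <= `|rho| <= (1 + alpha0)%:C ->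
      let phi := fun (j : 'I_3) (z : CC R) => rho * z + eps0%:C * c j in
      closure (udisc R) `<=` \bigcup_(j : 'I_3) (phi j @` udisc R) /\
      exists H : 'I_3 -> set (CC R),
        [/\ forall j, open (H j),
            udisc R = \bigcup_(j : 'I_3) H j,
            forall j, closure (phi j @` (H j)) `<=` udisc R &
            forall j, closure (phi j @` (cdilate (3^-1) (H j)))
                        `<=` cdilate (3^-1) (udisc R)]].
Proof.
move=> eta heta.
have hD := @notal_D0 _ _ _ _ hna.
have hp : RE (c ord0) + RE (c (inord 1)) + RE (c (inord 2)) = 0 by rewrite -!ReD hsum.
have hq : IM (c ord0) + IM (c (inord 1)) + IM (c (inord 2)) = 0 by rewrite -!ImD hsum.
have [d [/andP [hd0 hd1] hkey]] := @key_real _ _ _ _ _ _ _ hp hq hD.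
pose S := 1 + (RE (c ord0)^+2 + IM (c ord0)^+2) + (RE (c (inord 1))^+2 + IM (c (inord 1))^+2)
   + (RE (c (inord 2))^+2 + IM (c (inord 2))^+2).
have hsq : forall j, 0 <= RE (c j)^+2 + IM (c j)^+2 by move=> j; rewrite addr_ge0 ?sqr_ge0.
have hS1 : 1 <= S by have := hsq ord0; have := hsq (inord 1); have := hsq (inord 2); rewrite /S; lra.
have hSj : forall j, RE (c j)^+2 + IM (c j)^+2 <= S.
  have := hsq ord0; have := hsq (inord 1); have := hsq (inord 2).
  by move=> h2 h1 h0 j; case: (ord3 j) => ->; rewrite /S; lra.
have hS0 : 0 < S by lra.
pose eps := Num.min (eta / 2) (d / (6 * S)).
have he0 : 0 < eps by rewrite /eps lt_min !divr_gt0 // mulr_gt0.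
have heeta : eps < eta by rewrite /eps gt_min; apply/orP; left; lra.
have heS : 6 * eps * S <= d.
  have : eps <= d / (6 * S) by rewrite /eps ge_min lexx orbT.
  rewrite ler_pdivlMr ?mulr_gt0 //; lra.
have hed0 : 0 < eps * d by rewrite mulr_gt0.
pose alpha := Num.min (eta / 2) (eps * d / 8).
have ha0 : 0 < alpha by rewrite /alpha lt_min !divr_gt0.
have haeta : alpha < eta by rewrite /alpha gt_min; apply/orP; left; lra.
have ha8 : 8 * alpha <= eps * d.
  have : alpha <= eps * d / 8 by rewrite /alpha ge_min lexx orbT.
  lra.
have hed : eps * d <= 1/6.
  have : eps * S <= d / 6 by lra.
  have : eps <= eps * S by rewrite ler_peMr //; lra.
  nra.
exists eps, alpha; split; [by rewrite he0 heeta | by rewrite ha0 haeta |].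
move=> rho hrho phi.
move: hrho; rewrite normCE !lecR => /andP [hr1 hr2].
have hnr0 : 0 < nz rho by lra.
have hrho0 : rho != 0 by apply/negP => /eqP h; move: hnr0; rewrite h nz0 ltxx.
split.
  move=> z hz.
  have hzb := @closure_sub_ball R 0 1 (1 + alpha) (udisc R) ltac:(lra) _ z hz.
  have {hzb} hzn : nz z < 1 + alpha.
    move: hzb; rewrite udiscE one_C => /(_ (fun w h => h)).
    by rewrite ballE sub0r normrN normCE ltcR.
  have fin1 : forall j, d * nz z <= RE z * RE (c j) + IM z * IM (c j) ->
      (\bigcup_(j : 'I_3) (phi j @` udisc R)) z.
    move=> j hj; exists j => //.
    exists ((z - eps%:C * c j) / rho).
      rewrite /udisc /= normrM normfV !normCE -fmorphV -rmorphM one_C ltcR.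
      rewrite ltr_pdivrMr // mul1r nzB.
      by apply: (@L_cov _ _ _ _ _ _ d alpha S) => //; try exact: hSj; lra.
    by rewrite /phi mulrC divfK // subrK.
  have := hkey (- RE z) (- IM z); rewrite !sqrrN -/(nz z).
  by case=> h; [apply: (fin1 ord0) | apply: (fin1 (inord 1)) | apply: (fin1 (inord 2))]; lra.
pose r1 := 1 - eps * d / 2.
pose f := fun (t : R) (j : 'I_3) (z : CC R) => rho * z + t%:C * c j.
exists (fun j => udisc R `&` (f eps j @^-1` ball 0 r1%:C) `&` (f (3 * eps) j @^-1` ball 0 r1%:C)).
split.
- move=> j; apply: openI; [apply: openI|]; [rewrite udiscE; exact: ball_open | exact: open_aff | exact: open_aff].
- apply/seteqP; split => z; last by move=> [j _ [[hz _] _]].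
  move=> hz.
  have hzn : nz z < 1 by move: hz; rewrite /udisc /= normCE one_C ltcR.
  have hun : nz (rho * z) < 1 + alpha.
    rewrite nzM; have := nz_ge0 z; nra.
  have fin2 : forall j, RE (rho * z) * RE (c j) + IM (rho * z) * IM (c j) <= - (d * nz (rho * z)) ->
      (\bigcup_(j : 'I_3) (udisc R `&` (f eps j @^-1` ball 0 r1%:C) `&` (f (3 * eps) j @^-1` ball 0 r1%:C))) z.
    move=> j hj; exists j => //; split; first split => //.
    + rewrite /= ballE sub0r normrN normCE ltcR /f nzD.
      by apply: (@L_H _ _ _ _ _ _ eps d alpha S) => //; try exact: hSj; lra.
    + rewrite /= ballE sub0r normrN normCE ltcR /f nzD.
      by apply: (@L_H _ _ _ _ _ _ eps d alpha S) => //; try exact: hSj; lra.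
  have := hkey (RE (rho * z)) (IM (rho * z)); rewrite -/(nz (rho * z)).
  by case=> h; [apply: (fin2 ord0) | apply: (fin2 (inord 1)) | apply: (fin2 (inord 2))].
- move=> j; rewrite udiscE one_C.
  apply: (@closure_sub_ball _ 0 r1 1); first by rewrite /r1; lra.
  by move=> w [z [[_ hz1] _] <-].
- move=> j.
  have sub1 : phi j @` cdilate 3^-1
      (udisc R `&` (f eps j @^-1` ball 0 r1%:C) `&` (f (3 * eps) j @^-1` ball 0 r1%:C))
      `<=` ball 0 (r1 / 3)%:C.
    move=> w [v [z [_ hz3] <-] <-].
    have e : phi j (3^-1 * z) = 3^-1 * f (3 * eps) j z.
      rewrite /phi /f rmorphM /= -three_C.
      by field.
    move: hz3; rewrite /= !ballE !sub0r !normrN e normrM normfV normr_nat => h3.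
    rewrite (_ : (r1 / 3)%:C = 3^-1 * r1%:C); last by rewrite rmorphM /= fmorphV /= -three_C mulrC.
    by rewrite ltr_pM2l // invr_gt0 ltr0n.
  move=> w hw.
  have := @closure_sub_ball _ 0 (r1 / 3) (1 / 3) _ ltac:(rewrite /r1; lra) sub1 w hw.
  rewrite ballE sub0r normrN => hw3.
  exists (3 * w); last by rewrite mulKf // pnatr_eq0.
  rewrite /udisc /= normrM normr_nat.
  move: hw3; rewrite (_ : (1 / 3 : R)%:C = 3^-1); last by rewrite rmorphM /= fmorphV /= -three_C rmorph1 mul1r.
  move=> hw3.
  have h3 : (3 : CC R) * `|w| < 3 * 3^-1 by rewrite ltr_pM2l // ltr0n.
  by rewrite mulfV ?pnatr_eq0 in h3.
Qed.
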